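(* Let $k$ be a field of characteristic different from $2$. Among Lie algebras over $k$ of the form $\mathfrak{n}(S,E)$ with $(S,E)$ a finite simple graph and $\dim\mathfrak{n}(S,E)=6$, there are exactly five isomorphism classes.
   Context: A finite simple graph $(S,E)$ has finite vertex set $S$ and edge set $E$ consisting of unordered pairs $\alpha\beta$ of distinct vertices. Let $V$ be the $k$-vector space with basis $S$, and let $W\subseteq \bigwedge^2 V$ be the subspace spanned by all $\alpha\wedge\beta$ with $\alpha,\beta\in S$, $\alpha\neq\beta$ and $\alpha\beta\notin E$. The Lie algebra $\mathfrak{n}(S,E)$ is the vector space $V\oplus (\bigwedge^2V)/W$ with bracket determined by $[v_1,v_2]=v_1\wedge v_2 \bmod W$ for $v_1,v_2\in V$ and $[x,y]=0$ for $x\in\mathfrak{n}(S,E)$, $y\in(\bigwedge^2V)/W$. It has dimension $|S|+|E|$. *)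

(* Defs.v *)
From HB Require Import structures.
From mathcomp Require Import all_boot all_order all_algebra.
Set Implicit Arguments. Unset Strict Implicit. Unset Printing Implicit Defensive.
Import GRing.Theory.
Local Open Scope ring_scope.

Record sgraph := SGraph {
  nv : nat;
  adj : rel 'I_nv;
  adj_sym : symmetric adj;
  adj_irr : irreflexive adj }.
Arguments adj : clear implicits.

(* Edges = unordered pairs {a,b} in E, represented by the ordered pair (a,b)
   with a < b. *)
Definition edge (G : sgraph) :=
  {p : 'I_(nv G) * 'I_(nv G) | ((p.1 < p.2)%N && adj G p.1 p.2)}.

Definition ndim (G : sgraph) : nat := (nv G + #|{: edge G}|)%N.

(* The underlying vector space V (+) (/\^2 V)/W of n(S,E), in coordinates:
   the first component gives the coordinates on the basis S of V, the
   second the coordinates on the basis {alpha /\ beta mod W | alpha beta in E,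
   alpha < beta} of (/\^2 V)/W. *)
Notation nlie k G :=
  ({ffun 'I_(nv G) -> k^o} * {ffun edge G -> k^o})%type.

(* The bracket: [v1 + w1, v2 + w2] = v1 /\ v2 mod W.  The coordinate of
   v1 /\ v2 on alpha /\ beta (alpha < beta) is v1_a v2_b - v1_b v2_a. *)
Definition nbr (k : fieldType) (G : sgraph) (x y : nlie k G) : nlie k G :=
  (0, [ffun p : edge G =>
         x.1 (val p).1 * y.1 (val p).2 - x.1 (val p).2 * y.1 (val p).1]).

Definition lie_iso (k : fieldType) (G H : sgraph) : Prop :=
  exists f : {linear nlie k G -> nlie k H},
    bijective f /\ forall x y, f (nbr x y) = nbr (f x) (f y).

(* Main.v *)
Require Import Defs.
From HB Require Import structures.
From mathcomp Require Import all_boot all_order all_algebra.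
Set Implicit Arguments. Unset Strict Implicit. Unset Printing Implicit Defensive.
Import GRing.Theory.
Local Open Scope ring_scope.
From Stdlib Require Import Classical.

Definition cf (k : fieldType) m n (s : 'I_m -> 'I_n) (q : 'I_m * 'I_m) (p : 'I_n * 'I_n) : k :=
  if (s q.1 == p.1) && (s q.2 == p.2) then 1
  else if (s q.1 == p.2) && (s q.2 == p.1) then -1 else 0.

Section GIso.
Variables (k : fieldType) (G H : sgraph).
Variables (s : 'I_(nv G) -> 'I_(nv H)) (t : 'I_(nv H) -> 'I_(nv G)).
Hypotheses (st : cancel s t) (ts : cancel t s).
Hypothesis hadj : forall a b, adj H (s a) (s b) = adj G a b.

Lemma cf_sym p q : cf k t p q = cf k s q p.
Proof.
rewrite /cf.
have E : forall a b, (t a == b) = (a == s b).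
  by move=> a b; apply/eqP/eqP => [<-|->]; rewrite ?ts ?st.
rewrite !E ![_ == s _]eq_sym.
by case: (s q.1 == p.1); case: (s q.2 == p.2); case: (s q.1 == p.2); case: (s q.2 == p.1).
Qed.

Lemma col (p : edge H) : exists q0 : edge G,
  (forall q, q != q0 -> cf k s (val q) (val p) = 0) /\
  ((s (val q0).1 = (val p).1 /\ s (val q0).2 = (val p).2 /\ cf k s (val q0) (val p) = 1) \/
   (s (val q0).1 = (val p).2 /\ s (val q0).2 = (val p).1 /\ cf k s (val q0) (val p) = -1)).
Proof.
case: p => [[p1 p2] /= /andP[lt12 a12]].
set a := t p1; set b := t p2.
have ab : adj G a b by rewrite -hadj /a /b !ts.
have nab : a != b.
  by apply/negP => /eqP e; move: ab; rewrite e (@adj_irr G).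
case: (ltngtP a b) => [lab|lba|eab]; last by rewrite (val_inj eab) eqxx in nab.
- have hq : ((a, b).1 < (a, b).2)%N && adj G (a, b).1 (a, b).2 by rewrite /= lab ab.
  exists (exist _ (a, b) hq); split.
    move=> [[q1 q2] hq'] hne; have /andP[l12 _] := hq'; rewrite /cf /=.
    case: ifP => [/andP[/eqP e1 /eqP e2] | _].
      case/eqP: hne; apply: val_inj => /=.
      by rewrite /a /b -e1 -e2 !st.
    case: ifP => [/andP[/eqP e1 /eqP e2] | //].
    move: l12; rewrite -(st q1) -(st q2) e1 e2 -/a -/b => l.
    by move: (ltn_trans l lab); rewrite ltnn.
  by left; rewrite /= /a /b !ts /cf /= !ts !eqxx.
- have hq : ((b, a).1 < (b, a).2)%N && adj G (b, a).1 (b, a).2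
    by rewrite /= lba (@adj_sym G) ab.
  exists (exist _ (b, a) hq); split.
    move=> [[q1 q2] hq'] hne; have /andP[l12 _] := hq'; rewrite /cf /=.
    case: ifP => [/andP[/eqP e1 /eqP e2] | _].
      move: l12; rewrite -(st q1) -(st q2) e1 e2 -/a -/b => l.
      by move: (ltn_trans l lba); rewrite ltnn.
    case: ifP => [/andP[/eqP e1 /eqP e2] | //].
    case/eqP: hne; apply: val_inj => /=.
    by rewrite /a /b -e1 -e2 !st.
  right; rewrite /= /a /b !ts /cf /= !ts !eqxx /=.
  have -> : (p2 == p1) = false by apply/eqP => e; move: lt12; rewrite e ltnn.
  by [].
Qed.

Definition Fm (x : nlie k G) : nlie k H :=
  ([ffun j => x.1 (t j)],
   [ffun p : edge H => \sum_(q : edge G) cf k s (val q) (val p) *: x.2 q]).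

Lemma Fm_lin : linear Fm.
Proof.
move=> a x y; rewrite /Fm /=; congr pair; apply/ffunP => j; rewrite !ffunE //.
rewrite scaler_sumr -big_split /=; apply: eq_bigr => q _.
by rewrite !ffunE scalerDr !scalerA mulrC.
Qed.

Lemma Fm_br x y : Fm (nbr x y) = nbr (Fm x) (Fm y).
Proof.
rewrite /Fm /nbr /=; congr pair; apply/ffunP => p; rewrite !ffunE //.
have [q0 [h0 [[e1 [e2 hc]]|[e1 [e2 hc]]]]] := col p; simpl in h0, e1, e2, hc.
- rewrite (bigD1 q0) //= big1 ?addr0 => [|q hq]; last by rewrite h0 ?scale0r.
  by rewrite hc ffunE scale1r -e1 -e2 !st.
- rewrite (bigD1 q0) //= big1 ?addr0 => [|q hq]; last by rewrite h0 ?scale0r.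
  by rewrite hc ffunE -e1 -e2 !st scaleN1r opprB.
Qed.
End GIso.

HB.instance Definition _ (k : fieldType) (G H : sgraph) s t :=
  GRing.isLinear.Build k (nlie k G) (nlie k H) _ (@Fm k G H s t) (@Fm_lin k G H s t).

Lemma orth (k : fieldType) (G H : sgraph) (s : 'I_(nv G) -> 'I_(nv H)) t
  (st : cancel s t) (ts : cancel t s) (hadj : forall a b, adj H (s a) (s b) = adj G a b)
  (q q' : edge G) :
  \sum_(p : edge H) cf k s (val q) (val p) * cf k s (val q') (val p) = (q == q')%:R.
Proof.
have hadj' : forall a b, adj G (t a) (t b) = adj H a b by move=> a b; rewrite -hadj !ts.
have [p0 [h0 hp0]] := col k ts st hadj' q.
rewrite (bigD1 p0) //= big1 ?addr0 => [|p hp]; last first.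
  by rewrite -(cf_sym k st ts) h0 ?mul0r.
rewrite -!(cf_sym k st ts).
have hnz : cf k t (val p0) (val q) != 0.
  by case: hp0 => [[_ [_ ->]]|[_ [_ ->]]]; rewrite ?oner_eq0 ?oppr_eq0 ?oner_eq0.
case: eqP => [<-|nqq].
  by case: hp0 => [[_ [_ ->]]|[_ [_ ->]]]; rewrite ?mulr1 ?mulrNN ?mulr1.
have [q0 [h1 _]] := col k st ts hadj p0.
have eq0 : q = q0.
  by apply/eqP; apply: contraNT hnz => hq; rewrite (cf_sym k st ts) h1.
rewrite [X in _ * X](cf_sym k st ts) h1 ?mulr0 // -eq0 eq_sym.
by apply/eqP => e; apply: nqq.
Qed.

Lemma Fm_inv (k : fieldType) (G H : sgraph) (s : 'I_(nv G) -> 'I_(nv H)) t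
  (st : cancel s t) (ts : cancel t s) (hadj : forall a b, adj H (s a) (s b) = adj G a b) :
  cancel (@Fm k G H s t) (@Fm k H G t s).
Proof.
case=> v w; rewrite /Fm /=; congr pair; apply/ffunP => q; rewrite !ffunE ?st //.
under eq_bigr => p _ do rewrite ffunE (cf_sym k st ts) scaler_sumr.
rewrite exchange_big /=.
under eq_bigr => q' _ do (under eq_bigr => p _ do rewrite scalerA; rewrite -scaler_suml (orth k st ts hadj)).
rewrite (bigD1 q) //= eqxx scale1r big1 ?addr0 // => q' hq.
by rewrite eq_sym (negbTE hq) scale0r.
Qed.

Lemma giso_lie (k : fieldType) (G H : sgraph) (s : 'I_(nv G) -> 'I_(nv H)) t
  (st : cancel s t) (ts : cancel t s) (hadj : forall a b, adj H (s a) (s b) = adj G a b) :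
  lie_iso k G H.
Proof.
have hadj' : forall a b, adj G (t a) (t b) = adj H a b by move=> a b; rewrite -hadj !ts.
exists (@Fm k G H s t : {linear _ -> _}); split; last exact: Fm_br.
exists (@Fm k H G t s); [exact: Fm_inv | exact: Fm_inv].
Qed.

Definition Dm (k : fieldType) (G : sgraph) m := forall xs ys : 'I_m.+1 -> nlie k G,
  exists c : 'I_m.+1 -> k, (exists i, c i != 0) /\ \sum_i c i *: nbr (xs i) (ys i) = 0.
Definition Cm (k : fieldType) (G : sgraph) m := forall zs : 'I_m.+1 -> nlie k G,
  (forall i x, nbr (zs i) x = 0) ->
  exists c : 'I_m.+1 -> k, (exists i, c i != 0) /\ \sum_i c i *: zs i = 0.

Lemma Dm_iso k G H m : lie_iso k G H -> Dm k G m <-> Dm k H m.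
Proof.
case=> f [[g fg gf] fbr]; split=> hD xs ys.
- have [c [hc e]] := hD (g \o xs) (g \o ys); exists c; split => //.
  rewrite -[RHS](linear0 f) -e linear_sum.
  by apply: eq_bigr => i _; rewrite linearZ fbr /= !gf.
- have [c [hc e]] := hD (f \o xs) (f \o ys); exists c; split => //.
  apply: (can_inj fg); rewrite linear0 linear_sum -[RHS]e.
  by apply: eq_bigr => i _; rewrite linearZ fbr.
Qed.

Lemma Cm_iso k G H m : lie_iso k G H -> Cm k G m <-> Cm k H m.
Proof.
case=> f [[g fg gf] fbr]; split=> hC zs hz.
- have hz' : forall i x, nbr (g (zs i)) x = 0.
    by move=> i x; apply: (can_inj fg); rewrite fbr gf hz linear0.
  have [c [hc e]] := hC _ hz'; exists c; split => //.
  rewrite -[RHS](linear0 f) -e linear_sum.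
  by apply: eq_bigr => i _; rewrite linearZ /= gf.
- have hz' : forall i x, nbr (f (zs i)) x = 0.
    by move=> i x; rewrite -[x]gf -fbr hz linear0.
  have [c [hc e]] := hC _ hz'; exists c; split => //.
  apply: (can_inj fg); rewrite linear0 linear_sum -[RHS]e.
  by apply: eq_bigr => i _; rewrite linearZ.
Qed.

Lemma dep_rel (k : fieldType) (T : finType) m (ws : 'I_m.+1 -> {ffun T -> k^o}) :
  (#|T| <= m)%N -> exists c : 'I_m.+1 -> k, (exists i, c i != 0) /\ \sum_i c i *: ws i = 0.
Proof.
move=> hT; pose X := [tuple ws i | i < m.+1].
have nf : ~~ free X.
  apply/negP; rewrite /free size_tuple => /eqP h.
  have := dimvS (subvf <<X>>%VS); rewrite h dimvf.
  rewrite (_ : dim _ = (#|T| * 1)%N) // muln1 => h2. by move: (leq_trans h2 hT); rewrite ltnn.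
apply: NNPP => hn; move/negP: nf; apply; apply/freeP => c hc i.
apply: NNPP => hci; apply: hn; exists c; split; first by exists i; apply/eqP.
rewrite -[RHS]hc; apply: eq_bigr => j _; by rewrite -tnth_nth tnth_mktuple.
Qed.

Lemma sumP1 (U V : zmodType) n (F : 'I_n -> U * V) : (\sum_i F i).1 = \sum_i (F i).1.
Proof. by apply: big_morph. Qed.
Lemma sumP2 (U V : zmodType) n (F : 'I_n -> U * V) : (\sum_i F i).2 = \sum_i (F i).2.
Proof. by apply: big_morph. Qed.
Lemma pair0 (U V : zmodType) (x : U * V) : x.1 = 0 -> x.2 = 0 -> x = 0.
Proof. by case: x => a b /= ha hb; subst. Qed.
Lemma sum_delta (R : pzRingType) n (c : 'I_n -> R) a : \sum_j c j * (j == a)%:R = c a.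
Proof.
rewrite (bigD1 a) //= eqxx mulr1 big1 ?addr0 // => j hj.
by rewrite (negbTE hj) mulr0.
Qed.

Lemma D_holds (k : fieldType) (G : sgraph) m : (#|{: edge G}| <= m)%N -> Dm k G m.
Proof.
move=> hm xs ys.
have [c [hc e]] := dep_rel (fun i => (nbr (xs i) (ys i)).2) hm.
exists c; split => //; apply: pair0; rewrite ?sumP1 ?sumP2.
  by apply: big1 => i _ /=; rewrite scaler0.
by rewrite -[RHS]e; apply: eq_bigr.
Qed.

Lemma central1 (k : fieldType) (G : sgraph) (z : nlie k G) :
  (forall j, exists l, adj G j l) -> (forall x, nbr z x = 0) -> z.1 = 0.
Proof.
move=> hn hz; apply/ffunP => j; rewrite ffunE.
have [l hl] := hn j.
have jl : j != l by apply/negP => /eqP e; move: hl; rewrite e (@adj_irr G).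
pose x : nlie k G := ([ffun i => (i == l)%:R], 0).
case: (ltngtP j l) => [jlt|ljt|e]; last by rewrite (val_inj e) eqxx in jl.
- have hq : ((j, l).1 < (j, l).2)%N && adj G (j, l).1 (j, l).2 by rewrite /= jlt hl.
  have := congr1 (fun u : nlie k G => u.2 (exist _ (j, l) hq)) (hz x).
  by rewrite /= !ffunE /= eqxx (negbTE jl) mulr1 mulr0 subr0.
- have hq : ((l, j).1 < (l, j).2)%N && adj G (l, j).1 (l, j).2
    by rewrite /= ljt (@adj_sym G) hl.
  have := congr1 (fun u : nlie k G => u.2 (exist _ (l, j) hq)) (hz x).
  rewrite /= !ffunE /= eqxx (negbTE jl) mulr1 mulr0 sub0r.
  by move/eqP; rewrite oppr_eq0 => /eqP.
Qed.

Lemma C_holds (k : fieldType) (G : sgraph) m :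
  (forall j, exists l, adj G j l) -> (#|{: edge G}| <= m)%N -> Cm k G m.
Proof.
move=> hn hm zs hz.
have [c [hc e]] := dep_rel (fun i => (zs i).2) hm.
exists c; split => //; apply: pair0; rewrite ?sumP1 ?sumP2.
  by apply: big1 => i _ /=; rewrite (central1 hn (hz i)) scaler0.
by rewrite -[RHS]e; apply: eq_bigr.
Qed.

Lemma D_fails (k : fieldType) (G : sgraph) m (qs : 'I_m.+1 -> edge G) :
  injective qs -> ~ Dm k G m.
Proof.
move=> iq hD.
pose e (a : 'I_(nv G)) : {ffun 'I_(nv G) -> k^o} := [ffun j => (j == a)%:R].
have [c [[i hi] h]] := hD (fun i => (e (val (qs i)).1, 0)) (fun i => (e (val (qs i)).2, 0)).
have := congr1 (fun u : nlie k G => u.2 (qs i)) h.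
rewrite /= sumP2 sum_ffunE ffunE.
under eq_bigr => j _ do rewrite /= ffunE /= !ffunE.
have E : forall j, (((val (qs i)).1 == (val (qs j)).1)%:R * ((val (qs i)).2 == (val (qs j)).2)%:R -
      ((val (qs i)).2 == (val (qs j)).1)%:R * ((val (qs i)).1 == (val (qs j)).2)%:R : k^o)
      = (j == i)%:R.
  move=> j; have [->|nji] := eqVneq j i.
    case: (qs i) => [[a b] hp] /=; have /andP[hab _] := hp; simpl in hab.
    rewrite !eqxx mulr1 (_ : (b == a) = false) ?mul0r ?subr0 //.
    by apply/eqP => eba; move: hab; rewrite eba ltnn.
  move: (iq i j); case: (qs i) => [[a b] hpab]; case: (qs j) => [[c1 d] hpcd] hij /=.
  have /andP[hab _] := hpab; have /andP[hcd _] := hpcd.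
  have -> : ((b == c1)%:R * (a == d)%:R : k^o) = 0.
    case: eqP => [ebc|]; case: eqP => [ead|] //=; rewrite ?mul0r ?mulr0 //.
    simpl in hab, hcd; rewrite ebc in hab; rewrite -ead in hcd.
    by move: (ltn_trans hab hcd); rewrite ltnn.
  rewrite subr0.
  case: eqP => [eac|]; case: eqP => [ebd|] //=; rewrite ?mul0r ?mulr0 //.
  by case/eqP: nji; apply: esym; apply: hij; apply: val_inj => /=; rewrite eac ebd.
under eq_bigr => j _ do rewrite /GRing.scale /= E.
by rewrite sum_delta => /eqP; rewrite (negbTE hi).
Qed.

Lemma C_fails (k : fieldType) (G : sgraph) m v (qs : 'I_m -> edge G) :
  injective qs -> (forall y, ~~ adj G v y) -> ~ Cm k G m.
Proof.
move=> iq iso hC.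
pose zs (j : 'I_m.+1) : nlie k G :=
  if unlift ord0 j is Some i then (0, [ffun p => (p == qs i)%:R])
  else ([ffun l => (l == v)%:R], 0).
have hz : forall j x, nbr (zs j) x = 0.
  move=> j x; rewrite /zs; case: (unlift ord0 j) => [i|]; apply: pair0 => //=;
    apply/ffunP => p; rewrite !ffunE.
    by rewrite !mul0r subrr.
  case: p => [[a b] hp] /=; have /andP[_ hab] := hp; simpl in hab.
  have -> : (a == v) = false by apply/eqP => e; move: (iso b); rewrite -e hab.
  have -> : (b == v) = false.
    by apply/eqP => e; move: (iso a); rewrite -e (@adj_sym G) hab.
  by rewrite !mul0r subrr.
have [c [[i hi] h]] := hC zs hz.
case: (unliftP ord0 i) => [i'|] ei; subst i.
- have := congr1 (fun u : nlie k G => u.2 (qs i')) h.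
  rewrite /= sumP2 sum_ffunE ffunE.
  have E : forall j, c j *: (zs j).2 (qs i') = c j * (j == lift ord0 i')%:R.
    move=> j; rewrite /zs; case: (unliftP ord0 j) => [j'|] ->.
      by rewrite /= ffunE (inj_eq iq) (inj_eq (@lift_inj _ ord0)) eq_sym.
    by rewrite /= ffunE scaler0 mulr0.
  under eq_bigr => j _ do rewrite ffunE E.
  by rewrite sum_delta => /eqP; rewrite (negbTE hi).
- have := congr1 (fun u : nlie k G => u.1 v) h.
  rewrite /= sumP1 sum_ffunE ffunE.
  have E : forall j, c j *: (zs j).1 v = c j * (j == ord0)%:R.
    move=> j; rewrite /zs; case: (unliftP ord0 j) => [j'|] ->.
      by rewrite /= ffunE scaler0 mulr0.
    by rewrite /= ffunE eqxx; exact: erefl.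
  under eq_bigr => j _ do rewrite /= ffunE E.
  by rewrite sum_delta => /eqP; rewrite (negbTE hi).
Qed.

Definition spr n (x y u v : 'I_n) := ((x == u) && (y == v)) || ((x == v) && (y == u)).
Lemma spr_sym n (u v : 'I_n) x y : spr x y u v = spr y x u v.
Proof. by rewrite /spr; case: (x == u); case: (y == v); case: (x == v); case: (y == u). Qed.
Lemma spr_sym2 n (u v : 'I_n) x y : spr x y u v = spr x y v u.
Proof. by rewrite /spr orbC. Qed.
Lemma spr_irr n (u v : 'I_n) x : u != v -> spr x x u v = false.
Proof. move=> h; rewrite /spr; case: eqP => [->|]; case: eqP => [e|] //=; by rewrite ?e eqxx in h. Qed.
Lemma spr_inj n m (f : 'I_n -> 'I_m) : injective f -> forall x y u v,
  spr (f x) (f y) (f u) (f v) = spr x y u v.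
Proof. by move=> fi x y u v; rewrite /spr !(inj_eq fi). Qed.

Lemma card_edge (G : sgraph) (s : seq ('I_(nv G) * 'I_(nv G))) : uniq s ->
  (forall p : 'I_(nv G) * 'I_(nv G), ((p.1 < p.2)%N && adj G p.1 p.2) = (p \in s)) -> #|{: edge G}| = size s.
Proof.
move=> us hs; rewrite card_sig (eq_card (B := [pred p | p \in s])) => [|p]; last by rewrite !inE hs.
by rewrite (@eq_card _ _ (mem s)) // (card_uniqP _).
Qed.

Definition v6_0 : 'I_6 := @Ordinal 6 0 erefl.
Definition v5_0 : 'I_5 := @Ordinal 5 0 erefl.
Definition v5_1 : 'I_5 := @Ordinal 5 1 erefl.
Definition v4_0 : 'I_4 := @Ordinal 4 0 erefl.
Definition v4_1 : 'I_4 := @Ordinal 4 1 erefl.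
Definition v4_2 : 'I_4 := @Ordinal 4 2 erefl.
Definition v4_3 : 'I_4 := @Ordinal 4 3 erefl.
Definition v3_0 : 'I_3 := @Ordinal 3 0 erefl.
Definition v3_1 : 'I_3 := @Ordinal 3 1 erefl.
Definition v3_2 : 'I_3 := @Ordinal 3 2 erefl.

Definition adj0 : rel 'I_6 := fun _ _ => false.
Lemma adj0_sym : symmetric adj0. Proof. by []. Qed.
Lemma adj0_irr : irreflexive adj0. Proof. by []. Qed.
Definition G0 := SGraph adj0_sym adj0_irr.

Definition adj1 : rel 'I_5 := fun x y => spr x y v5_0 v5_1.
Lemma adj1_sym : symmetric adj1. Proof. by move=> x y; rewrite /adj1 !(spr_sym _ _ x y). Qed.
Lemma adj1_irr : irreflexive adj1. Proof. by move=> x; rewrite /adj1 !spr_irr. Qed.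
Definition G1 := SGraph adj1_sym adj1_irr.

Definition adj2 : rel 'I_4 := fun x y => spr x y v4_0 v4_1 || spr x y v4_1 v4_2.
Lemma adj2_sym : symmetric adj2. Proof. by move=> x y; rewrite /adj2 !(spr_sym _ _ x y). Qed.
Lemma adj2_irr : irreflexive adj2. Proof. by move=> x; rewrite /adj2 !spr_irr. Qed.
Definition G2 := SGraph adj2_sym adj2_irr.

Definition adj3 : rel 'I_4 := fun x y => spr x y v4_0 v4_1 || spr x y v4_2 v4_3.
Lemma adj3_sym : symmetric adj3. Proof. by move=> x y; rewrite /adj3 !(spr_sym _ _ x y). Qed.
Lemma adj3_irr : irreflexive adj3. Proof. by move=> x; rewrite /adj3 !spr_irr. Qed.
Definition G3 := SGraph adj3_sym adj3_irr.

Definition adj4 : rel 'I_3 := fun x y => x != y.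
Lemma adj4_sym : symmetric adj4. Proof. by move=> x y; rewrite /adj4 eq_sym. Qed.
Lemma adj4_irr : irreflexive adj4. Proof. by move=> x; rewrite /adj4 eqxx. Qed.
Definition G4 := SGraph adj4_sym adj4_irr.

Lemma cE0 : #|{: edge G0}| = 0%N.
Proof. by apply: (@card_edge G0 [::]) => // p; rewrite /= andbF. Qed.
Lemma cE1 : #|{: edge G1}| = 1%N.
Proof.
apply: (@card_edge G1 [:: (v5_0, v5_1)]) => // [[x y]].
by case: x => [[|[|[|[|[|[|x]]]]]] hx] //; case: y => [[|[|[|[|[|[|y]]]]]] hy].
Qed.
Lemma cE2 : #|{: edge G2}| = 2%N.
Proof.
apply: (@card_edge G2 [:: (v4_0, v4_1); (v4_1, v4_2)]) => // [[x y]].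
by case: x => [[|[|[|[|x]]]] hx] //; case: y => [[|[|[|[|y]]]] hy].
Qed.
Lemma cE3 : #|{: edge G3}| = 2%N.
Proof.
apply: (@card_edge G3 [:: (v4_0, v4_1); (v4_2, v4_3)]) => // [[x y]].
by case: x => [[|[|[|[|x]]]] hx] //; case: y => [[|[|[|[|y]]]] hy].
Qed.
Lemma cE4 : #|{: edge G4}| = 3%N.
Proof.
apply: (@card_edge G4 [:: (v3_0, v3_1); (v3_0, v3_2); (v3_1, v3_2)]) => // [[x y]].
by case: x => [[|[|[|x]]] hx] //; case: y => [[|[|[|y]]] hy].
Qed.

Lemma inj_nth (T : eqType) (x0 : T) (s : seq T) n : uniq s -> size s = n ->
  injective (fun i : 'I_n => nth x0 s i).
Proof.
move=> us hs i j /eqP; rewrite nth_uniq ?hs // => /eqP e; exact: val_inj.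
Qed.

Definition e1a : edge G1 := exist _ (v5_0, v5_1) erefl.
Definition e2a : edge G2 := exist _ (v4_0, v4_1) erefl.
Definition e2b : edge G2 := exist _ (v4_1, v4_2) erefl.
Definition e3a : edge G3 := exist _ (v4_0, v4_1) erefl.
Definition e3b : edge G3 := exist _ (v4_2, v4_3) erefl.
Definition e4a : edge G4 := exist _ (v3_0, v3_1) erefl.
Definition e4b : edge G4 := exist _ (v3_0, v3_2) erefl.
Definition e4c : edge G4 := exist _ (v3_1, v3_2) erefl.

Section Facts.
Variable k : fieldType.
Lemma D0_0 : Dm k G0 0. Proof. by apply: D_holds; rewrite cE0. Qed.
Lemma D1_1 : Dm k G1 1. Proof. by apply: D_holds; rewrite cE1. Qed.
Lemma D2_2 : Dm k G2 2. Proof. by apply: D_holds; rewrite cE2. Qed.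
Lemma D2_3 : Dm k G3 2. Proof. by apply: D_holds; rewrite cE3. Qed.
Lemma nD0_1 : ~ Dm k G1 0. Proof. apply: (@D_fails k G1 0 (fun i => nth e1a [:: e1a] i)); exact: inj_nth. Qed.
Lemma nD0_2 : ~ Dm k G2 0. Proof. apply: (@D_fails k G2 0 (fun i => nth e2a [:: e2a] i)); exact: inj_nth. Qed.
Lemma nD0_3 : ~ Dm k G3 0. Proof. apply: (@D_fails k G3 0 (fun i => nth e3a [:: e3a] i)); exact: inj_nth. Qed.
Lemma nD0_4 : ~ Dm k G4 0. Proof. apply: (@D_fails k G4 0 (fun i => nth e4a [:: e4a] i)); exact: inj_nth. Qed.
Lemma nD1_2 : ~ Dm k G2 1. Proof. apply: (@D_fails k G2 1 (fun i => nth e2a [:: e2a; e2b] i)); exact: inj_nth. Qed.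
Lemma nD1_3 : ~ Dm k G3 1. Proof. apply: (@D_fails k G3 1 (fun i => nth e3a [:: e3a; e3b] i)); exact: inj_nth. Qed.
Lemma nD1_4 : ~ Dm k G4 1. Proof. apply: (@D_fails k G4 1 (fun i => nth e4a [:: e4a; e4b] i)); exact: inj_nth. Qed.
Lemma nD2_4 : ~ Dm k G4 2. Proof. apply: (@D_fails k G4 2 (fun i => nth e4a [:: e4a; e4b; e4c] i)); exact: inj_nth. Qed.
Lemma C2_3 : Cm k G3 2.
Proof.
apply: C_holds; last by rewrite cE3.
case=> [[|[|[|[|j]]]] hj] //.
- by exists v4_1.
- by exists v4_0.
- by exists v4_3.
- by exists v4_2.
Qed.
Lemma nC2_2 : ~ Cm k G2 2.
Proof.
apply: (@C_fails k G2 2 v4_3 (fun i => nth e2a [:: e2a; e2b] i)); first exact: inj_nth.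
by case=> [[|[|[|[|j]]]] hj].
Qed.
End Facts.

Definition Gs (i : 'I_5) : sgraph :=
  match val i with 0 => G0 | 1 => G1 | 2 => G2 | 3 => G3 | _ => G4 end%N.

Section Sep.
Variable k : fieldType.
Lemma sepD m A B : Dm k A m -> ~ Dm k B m -> lie_iso k A B -> False.
Proof. by move=> hA hB /(@Dm_iso k A B m) h; apply: hB; apply/h. Qed.
Lemma sepD' m A B : ~ Dm k A m -> Dm k B m -> lie_iso k A B -> False.
Proof. by move=> hA hB /(@Dm_iso k A B m) h; apply: hA; apply/h. Qed.
Lemma sepC m A B : Cm k A m -> ~ Cm k B m -> lie_iso k A B -> False.
Proof. by move=> hA hB /(@Cm_iso k A B m) h; apply: hB; apply/h. Qed.
Lemma sepC' m A B : ~ Cm k A m -> Cm k B m -> lie_iso k A B -> False.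
Proof. by move=> hA hB /(@Cm_iso k A B m) h; apply: hA; apply/h. Qed.

Lemma noniso (i j : 'I_5) : lie_iso k (Gs i) (Gs j) -> i = j.
Proof.
case: i => [[|[|[|[|[|i]]]]] hi] //; case: j => [[|[|[|[|[|j]]]]] hj] //=;
  try by move=> _; apply: val_inj.
- by move=> h; exfalso; exact: (sepD (@D0_0 k) (@nD0_1 k) h).
- by move=> h; exfalso; exact: (sepD (@D0_0 k) (@nD0_2 k) h).
- by move=> h; exfalso; exact: (sepD (@D0_0 k) (@nD0_3 k) h).
- by move=> h; exfalso; exact: (sepD (@D0_0 k) (@nD0_4 k) h).
- by move=> h; exfalso; exact: (sepD' (@nD0_1 k) (@D0_0 k) h).
- by move=> h; exfalso; exact: (sepD (@D1_1 k) (@nD1_2 k) h).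
- by move=> h; exfalso; exact: (sepD (@D1_1 k) (@nD1_3 k) h).
- by move=> h; exfalso; exact: (sepD (@D1_1 k) (@nD1_4 k) h).
- by move=> h; exfalso; exact: (sepD' (@nD0_2 k) (@D0_0 k) h).
- by move=> h; exfalso; exact: (sepD' (@nD1_2 k) (@D1_1 k) h).
- by move=> h; exfalso; exact: (sepC' (@nC2_2 k) (@C2_3 k) h).
- by move=> h; exfalso; exact: (sepD (@D2_2 k) (@nD2_4 k) h).
- by move=> h; exfalso; exact: (sepD' (@nD0_3 k) (@D0_0 k) h).
- by move=> h; exfalso; exact: (sepD' (@nD1_3 k) (@D1_1 k) h).
- by move=> h; exfalso; exact: (sepC (@C2_3 k) (@nC2_2 k) h).
- by move=> h; exfalso; exact: (sepD (@D2_3 k) (@nD2_4 k) h).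
- by move=> h; exfalso; exact: (sepD' (@nD0_4 k) (@D0_0 k) h).
- by move=> h; exfalso; exact: (sepD' (@nD1_4 k) (@D1_1 k) h).
- by move=> h; exfalso; exact: (sepD' (@nD2_4 k) (@D2_2 k) h).
- by move=> h; exfalso; exact: (sepD' (@nD2_4 k) (@D2_3 k) h).
Qed.
End Sep.

Lemma relabel (H G : sgraph) (E : nv H = nv G) (sq : seq 'I_(nv H)) : uniq sq ->
  exists (s : 'I_(nv H) -> 'I_(nv G)) (t : 'I_(nv G) -> 'I_(nv H)),
    [/\ cancel s t, cancel t s &
        forall x0 i, (i < size sq)%N -> val (s (nth x0 sq i)) = i].
Proof.
move=> us.
pose L := sq ++ [seq x <- enum 'I_(nv H) | x \notin sq].
have uL : uniq L.
  rewrite cat_uniq us filter_uniq ?enum_uniq // andbT /=.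
  by apply/hasPn => x; rewrite mem_filter => /andP[].
have memL : forall x, x \in L.
  by move=> x; rewrite mem_cat mem_filter mem_enum andbT; case: (x \in sq).
have sizeL : size L = nv H.
  rewrite -[RHS](size_enum_ord (nv H)); apply: perm_size.
  by apply: uniq_perm => // [|x]; rewrite ?enum_uniq // memL mem_enum.
have ix : forall x, (index x L < nv H)%N.
  by move=> x; have := index_mem x L; rewrite memL sizeL.
pose s x := cast_ord E (Ordinal (ix x)).
pose t (y : 'I_(nv G)) := nth (cast_ord (esym E) y) L y.
have st : cancel s t by move=> x; rewrite /t /s /= nth_index.
have ts : cancel t s.
  move=> y; apply: val_inj; rewrite /s /t /= index_uniq // sizeL.
  by rewrite E.
exists s, t; split => // x0 i hi.
have hL : (i < size L)%N by rewrite size_cat (leq_trans hi) ?leq_addr.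
rewrite /s /= (_ : nth x0 sq i = nth x0 L i) ?index_uniq //.
by rewrite nth_cat hi.
Qed.

Lemma fin_iso (k : fieldType) (H G : sgraph) (E : nv H = nv G) (sq : seq 'I_(nv H)) :
  uniq sq ->
  (forall s : 'I_(nv H) -> 'I_(nv G), injective s ->
     (forall x0 i, (i < size sq)%N -> val (s (nth x0 sq i)) = i) ->
     forall x y, adj G (s x) (s y) = adj H x y) -> lie_iso k H G.
Proof.
move=> us h; have [s [t [st ts hs]]] := relabel E us.
exact: (giso_lie k st ts (h s (can_inj st) hs)).
Qed.

Lemma adj_has (H : sgraph) (qs : seq (edge H)) : (forall q, q \in qs) ->
  forall x y, adj H x y = has (fun q : edge H => spr x y (val q).1 (val q).2) qs.
Proof.
move=> hq x y; apply/idP/hasP => [hxy|[[[a b] hp] _ /= hs]].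
  have nxy : x != y by apply/negP => /eqP e; move: hxy; rewrite e (@adj_irr H).
  case: (ltngtP x y) => [lxy|lyx|e]; last by rewrite (val_inj e) eqxx in nxy.
  - have hp : ((x, y).1 < (x, y).2)%N && adj H (x, y).1 (x, y).2 by rewrite /= lxy hxy.
    by exists (exist _ (x, y) hp) => //=; rewrite /spr !eqxx.
  - have hp : ((y, x).1 < (y, x).2)%N && adj H (y, x).1 (y, x).2
      by rewrite /= lyx (@adj_sym H) hxy.
    by exists (exist _ (y, x) hp) => //=; rewrite /spr !eqxx orbT.
have /andP[_ hab] := hp; simpl in hab.
by case/orP: hs => /andP[/eqP -> /eqP ->] //; rewrite (@adj_sym H).
Qed.

Lemma lt_neq n (a b : 'I_n) : (a < b)%N -> a != b.
Proof. by move=> h; apply/eqP => e; move: h; rewrite e ltnn. Qed.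

Section Canon.
Variable k : fieldType.

Lemma iso0 (H : sgraph) : nv H = 6%N -> (forall x y, adj H x y = false) -> lie_iso k H G0.
Proof.
move=> E ha; apply: (@fin_iso k H G0 E [::]) => //.
Qed.

Lemma iso1 (H : sgraph) (a b : 'I_(nv H)) : nv H = 5%N -> a != b ->
  (forall x y, adj H x y = spr x y a b) -> lie_iso k H G1.
Proof.
move=> E nab ha; apply: (@fin_iso k H G1 E [:: a; b]).
  by rewrite /= inE nab.
move=> s si hs x y.
have sa : s a = v5_0 by apply: val_inj; exact: (hs a 0%N).
have sb : s b = v5_1 by apply: val_inj; exact: (hs a 1%N).
by rewrite /= /adj1 -sa -sb spr_inj // ha.
Qed.

Lemma iso2 (H : sgraph) (u m w : 'I_(nv H)) : nv H = 4%N -> uniq [:: u; m; w] ->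
  (forall x y, adj H x y = spr x y u m || spr x y m w) -> lie_iso k H G2.
Proof.
move=> E un ha; apply: (@fin_iso k H G2 E [:: u; m; w]) => // s si hs x y.
have su : s u = v4_0 by apply: val_inj; exact: (hs u 0%N).
have sm : s m = v4_1 by apply: val_inj; exact: (hs u 1%N).
have sw : s w = v4_2 by apply: val_inj; exact: (hs u 2%N).
by rewrite /= /adj2 -su -sm -sw !spr_inj // ha.
Qed.

Lemma iso3 (H : sgraph) (a b c d : 'I_(nv H)) : nv H = 4%N -> uniq [:: a; b; c; d] ->
  (forall x y, adj H x y = spr x y a b || spr x y c d) -> lie_iso k H G3.
Proof.
move=> E un ha; apply: (@fin_iso k H G3 E [:: a; b; c; d]) => // s si hs x y.
have sa : s a = v4_0 by apply: val_inj; exact: (hs a 0%N).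
have sb : s b = v4_1 by apply: val_inj; exact: (hs a 1%N).
have sc : s c = v4_2 by apply: val_inj; exact: (hs a 2%N).
have sd : s d = v4_3 by apply: val_inj; exact: (hs a 3%N).
by rewrite /= /adj3 -sa -sb -sc -sd !spr_inj // ha.
Qed.

Lemma iso4 (H : sgraph) : nv H = 3%N -> (forall x y, adj H x y = (x != y)) -> lie_iso k H G4.
Proof.
move=> E ha; apply: (@fin_iso k H G4 E [::]) => // s si _ x y.
by rewrite /= /adj4 (inj_eq si) ha.
Qed.
End Canon.

Lemma edge_le (H : sgraph) :
  (#|{: edge H}| <= #|[pred p : 'I_(nv H) * 'I_(nv H) | (p.1 < p.2)%N]|)%N.
Proof.
rewrite card_sig; apply: subset_leq_card; apply/subsetP => p; rewrite !inE.
by case/andP.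
Qed.

Lemma smallP n : (n <= 2)%N -> (#|[pred p : 'I_n * 'I_n | (p.1 < p.2)%N]| <= 1)%N.
Proof.
case: n => [|[|[|n]]] // _.
- rewrite (@eq_card _ _ (mem ([::] : seq ('I_0 * 'I_0)))) ?card0 // => [[x y]].
  by case: x => [x hx].
- rewrite (@eq_card _ _ (mem ([::] : seq ('I_1 * 'I_1)))) ?card0 // => [[x y]].
  by case: x => [[|x] hx] //; case: y => [[|y] hy].
- rewrite (@eq_card _ _ (mem [:: ((@Ordinal 2 0 erefl), (@Ordinal 2 1 erefl))])).
    by rewrite (card_uniqP _).
  move=> [x y].
  by case: x => [[|[|x]] hx] //; case: y => [[|[|y]] hy].
Qed.

Lemma three n (a : rel 'I_n) : n = 3%N ->
  #|[pred p : 'I_n * 'I_n | (p.1 < p.2)%N && a p.1 p.2]| = 3%N ->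
  forall x y : 'I_n, (x < y)%N -> a x y.
Proof.
move=> E; subst n => hc x y hxy.
have hP : #|[pred p : 'I_3 * 'I_3 | (p.1 < p.2)%N]| = 3%N.
  rewrite (@eq_card _ _ (mem [:: (v3_0, v3_1); (v3_0, v3_2); (v3_1, v3_2)])).
    by rewrite (card_uniqP _).
  move=> [x' y'].
  by case: x' => [[|[|[|x']]] hx] //; case: y' => [[|[|[|y']]] hy].
have sub : [pred p : 'I_3 * 'I_3 | (p.1 < p.2)%N && a p.1 p.2] \subset
           [pred p : 'I_3 * 'I_3 | (p.1 < p.2)%N].
  by apply/subsetP => p; rewrite !inE => /andP[].
move/subset_cardP: sub => /(_ (etrans hc (esym hP))) eqAB.
by have := eqAB (x, y); rewrite !inE /= hxy.
Qed.

Lemma classify (k : fieldType) (H : sgraph) : ndim H = 6%N -> exists i : 'I_5, lie_iso k H (Gs i).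
Proof.
rewrite /ndim => hd.
have hq : forall q, q \in enum {: edge H} by move=> q; rewrite mem_enum.
have hsz : size (enum {: edge H}) = #|{: edge H}| by rewrite cardE.
have hu := enum_uniq {: edge H}.
have ha := adj_has hq.
move: hq hsz hu ha; case: (enum _) => [|q1 [|q2 [|q3 [|q4 r]]]] _ /= hsz hu ha.
- exists (@Ordinal 5 0 erefl); apply: iso0.
    by rewrite -hsz addn0 in hd.
  by move=> x y; rewrite ha.
- exists (@Ordinal 5 1 erefl).
  move: ha; case: q1 => [[a b] hp] ha; have /andP[hab _] := hp; simpl in hab.
  apply: (@iso1 k H a b); first by rewrite -hsz addn1 in hd; case: hd.
    exact: lt_neq.
  by move=> x y; rewrite ha /= orbF.
- have E4 : nv H = 4%N by rewrite -hsz addn2 in hd; case: hd.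
  move: hu ha; case: q1 => [[a b] hp1]; case: q2 => [[c d] hp2] hu ha /=.
  have /andP[hab _] := hp1; have /andP[hcd _] := hp2; simpl in hab, hcd.
  have ne : (a, b) != (c, d).
    move: hu; rewrite andbT inE; apply: contra => /eqP e; apply/eqP; exact: val_inj.
  have ha' : forall x y, adj H x y = spr x y a b || spr x y c d.
    by move=> x y; rewrite ha orbF.
  have nab := lt_neq hab; have ncd := lt_neq hcd.
  case: (eqVneq a c) => [eac|nac].
    move: eac hcd ncd ha' ne => <- hcd ncd ha' ne.
    have nbd : b != d by apply: contra ne => /eqP ->.
    exists (@Ordinal 5 2 erefl); apply: (@iso2 k H b a d) => //.
      by rewrite /= !inE !negb_or eq_sym nab nbd ncd.
    by move=> x y; rewrite ha' (spr_sym2 a b).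
  case: (eqVneq a d) => [ead|nad].
    move: ead hcd ncd ha' ne => <- hcd ncd ha' ne.
    have ncb : c != b by apply: lt_neq (ltn_trans hcd hab).
    exists (@Ordinal 5 2 erefl); apply: (@iso2 k H c a b) => //.
      by rewrite /= !inE !negb_or ncd ncb nab.
    by move=> x y; rewrite ha' orbC.
  case: (eqVneq b c) => [ebc|nbc].
    move: ebc hcd ncd ha' ne => <- hcd ncd ha' ne.
    have nad' : a != d by apply: lt_neq (ltn_trans hab hcd).
    exists (@Ordinal 5 2 erefl); apply: (@iso2 k H a b d) => //.
      by rewrite /= !inE !negb_or nab nad' ncd.
  case: (eqVneq b d) => [ebd|nbd].
    move: ebd hcd ncd ha' ne => <- hcd ncd ha' ne.
    exists (@Ordinal 5 2 erefl); apply: (@iso2 k H a b c) => //.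
      by rewrite /= !inE !negb_or nab nac eq_sym ncd.
    by move=> x y; rewrite ha' (spr_sym2 c b).
  exists (@Ordinal 5 3 erefl); apply: (@iso3 k H a b c d) => //.
  by rewrite /= !inE !negb_or nab nac nad nbc nbd ncd.
- exists (@Ordinal 5 4 erefl).
  have E3 : nv H = 3%N by rewrite -hsz addn3 in hd; case: hd.
  have hc : #|[pred p : 'I_(nv H) * 'I_(nv H) | (p.1 < p.2)%N && adj H p.1 p.2]| = 3%N.
    by rewrite -card_sig -hsz.
  have h3 := three E3 hc.
  apply: iso4 => // x y; case: (ltngtP x y) => [l|l|e].
  - by rewrite h3 // (lt_neq l).
  - by rewrite (@adj_sym H) h3 // eq_sym (lt_neq l).
  - by rewrite (val_inj e) eqxx (@adj_irr H).
- exfalso.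
  have h2 : (nv H <= 2)%N.
    by move: hd; rewrite -hsz !addnS => [[]] <-; rewrite leq_addr.
  have := leq_trans (edge_le H) (smallP h2).
  by rewrite -hsz.
Qed.

Theorem mainTheorem5 (k : fieldType) (hk : (2 \notin [pchar k])%N) :
  exists G : 'I_5 -> sgraph,
    (forall i, ndim (G i) = 6%N) /\
    (forall i j, lie_iso k (G i) (G j) -> i = j) /\
    (forall H : sgraph, ndim H = 6%N -> exists i, lie_iso k H (G i)).
Proof.
exists Gs; split; last split.
- case=> [[|[|[|[|[|i]]]]] hi] //; rewrite /ndim /=.
  + by rewrite cE0.
  + by rewrite cE1.
  + by rewrite cE2.
  + by rewrite cE3.
  + by rewrite cE4.
- exact: noniso.
- move=> H; exact: classify.
Qed.
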